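(* In the setting of the context, the map $\mathscr H$ defined on $\mathscr P_1^C$ by \[ (\mathscr H\eta)_{r'}=\sum_{r\in C}\frac{\pi_rQ_{r,r'}}{\pi_{r'}}(f_r)_*\eta_r\qquad(r'\in C) \] maps $\mathscr P_1^C$ into $\mathscr P_1^C$ and satisfies $\mathcal W(\mathscr H\eta,\mathscr H\zeta)\le\rho\,\mathcal W(\eta,\zeta)$ for all $\eta,\zeta\in\mathscr P_1^C$.
   Context: Setting (construction of the paper): $X$ finite, $P$ irreducible row-stochastic, $\Sigma=\{x\in X^{\mathbb N_0}:P_{x_nx_{n+1}}>0\}$, $\{A_i\}_{i\in X}\subset\mathrm{GL}_2(\mathbb R)$ projectively uniformly hyperbolic w.r.t. $\Sigma$ (on $\widehat\Sigma=\{(x_n)_{n\in\mathbb Z}:P_{x_nx_{n+1}}>0\}$ there is a continuous invariant splitting $\mathbb R^2=E^d\oplus E^w$ into lines, $A_{x_0}E^*(\hat x)=E^*(\widehat\sigma\hat x)$, with $\|A_{x_{n-1}}\cdots A_{x_0}|_{E^w}\|<\|A_{x_{n-1}}\cdots A_{x_0}|_{E^d}\|$ for some $n$). A multicone $\{M_i\}$ is fixed (non-empty proper finite unions of open intervals in $\mathbb{RP}^1$, $\overline{[A_j](M_i)}\subset M_j$ when $P_{ij}>0$), with components $M_{i,a}$; $\beta(i,a,j)$ the unique $b$ with $[A_j](\overline{M_{i,a}})\subset M_{j,b}$; $R=\{((i,a),(j,b)):P_{ij}>0,\ b=\beta(i,a,j)\}$, $s(r)=(i,a)$, $t(r)=(j,b)$,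 $\tau(r)=j$; $Q_{r,r'}=P_{\tau(r)\tau(r')}$ if $t(r)=s(r')$ else $0$; $C$ a fixed recurrent class. $L_{i,a}\in\mathrm{GL}_2(\mathbb R)$ maps the projective non-negative cone onto $\overline{M_{i,a}}$; $B_r=\pm L_{t(r)}^{-1}A_{\tau(r)}L_{s(r)}$, sign chosen so $B_r$ is entrywise positive. If the period $d$ of $Q|_C$ exceeds $1$, $C,Q,B$ are replaced by the $d$-step system on words $(c_0,\dots,c_{d-1})$ through the cyclic classes ($Q_{c,c'}=Q_{c_{d-1}c'_0}Q_{c'_0c'_1}\cdots Q_{c'_{d-2}c'_{d-1}}$, $B_c=B_{c_{d-1}}\cdots B_{c_0}$), keeping names; then $Q|_C$ is irreducible and aperiodic with stationary vector $\pi$, $\pi_r>0$. For $B_r=\begin{pmatrix}a_r&b_r\\c_r&d_r\end{pmatrix}$, $f_r(x)=\frac{(a_r-b_r-c_r+d_r)x+(a_r+b_r-c_r-d_r)}{(a_r-b_r+c_r-d_r)x+(a_r+b_r+c_r+d_r)}$, and $0<\rho<1$ is fixed with $f_r([-1,1])\subset[-\rho,\rho]$ for all $r\in C$. Metrics: $d_{\mathrm{hyp}}(x,y)=2|\mathrm{artanh}\,x-\mathrm{artanh}\,y|$ on $(-1,1)$; $\mathscr P_1(-1,1)$ is the set of Borel probability measures $\nu$ on $(-1,1)$ with $\int d_{\mathrm{hyp}}(x,0)\,d\nu<\infty$; $W_1(\nu_1,\nu_2)=\inf_\eta\int d_{\mathrm{hyp}}(x,y)\,d\eta(x,y)$ over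 couplings $\eta$ of $\nu_1,\nu_2$; $\mathscr P_1^C=\prod_{r\in C}\mathscr P_1(-1,1)$ with metric $\mathcal W(\eta,\zeta)=\sum_{r\in C}\pi_rW_1(\eta_r,\zeta_r)$. *)

(* Defs.v *)
From HB Require Import structures.
From mathcomp Require Import all_boot all_order all_algebra.
From mathcomp Require Import all_classical all_reals all_analysis.
Set Implicit Arguments. Unset Strict Implicit. Unset Printing Implicit Defensive.
Import Order.TTheory GRing.Theory Num.Theory.
Local Open Scope classical_set_scope.
Local Open Scope ring_scope.

Section Defs.
Variable R : realType.

Definition artanh (x : R) : R := 2^-1 * ln ((1 + x) / (1 - x)).

Definition dhyp (x y : R) : R := 2 * `|artanh x - artanh y|.

Definition Iopen : set R := `](-1), 1[.

(* P_1(-1,1): Borel probability measures on R carried by (-1,1)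
   with finite first hyperbolic moment *)
Definition P1 (nu : probability R R) : Prop :=
  nu Iopen = 1%E /\ (\int[nu]_x (dhyp x 0)%:E < +oo)%E.

Definition coupling (nu1 nu2 : probability R R)
    (g : probability (R * R)%type R) : Prop :=
  (forall A : set R, measurable A -> g (fst @^-1` A) = nu1 A) /\
  (forall A : set R, measurable A -> g (snd @^-1` A) = nu2 A).

Definition W1 (nu1 nu2 : probability R R) : \bar R :=
  ereal_inf [set (\int[g]_z (dhyp z.1 z.2)%:E)%E
            | g in [set g : probability (R * R)%type R | coupling nu1 nu2 g]].

Definition fmob (B : 'M[R]_2) (x : R) : R :=
  let a := B 0 0 in let b := B 0 1 in let c := B 1 0 in let d := B 1 1 in
  ((a - b - c + d) * x + (a + b - c - d)) /
  ((a - b + c - d) * x + (a + b + c + d)).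

Variable C : finType.

Fixpoint kpow (Q : C -> C -> R) (n : nat) : C -> C -> R :=
  match n with
  | 0 => fun r r' => if r == r' then 1 else 0
  | n.+1 => fun r r' => \sum_(s : C) kpow Q n r s * Q s r'
  end.

Definition P1C (eta : C -> probability R R) : Prop := forall r, P1 (eta r).

Definition Wc (pi : C -> R) (eta zeta : C -> probability R R) : \bar R :=
  (\sum_(r : C) (pi r)%:E * W1 (eta r) (zeta r))%E.

Definition Hset (pi : C -> R) (Q : C -> C -> R) (B : C -> 'M[R]_2)
    (eta : C -> probability R R) (r' : C) : set R -> \bar R :=
  fun A => (\sum_(r : C) (pi r * Q r r' / pi r')%:E * eta r (fmob (B r) @^-1` A))%E.

End Defs.

(* Main.v *)
Require Import Defs.
From HB Require Import structures.
From mathcomp Require Import all_boot all_order all_algebra.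
From mathcomp Require Import all_classical all_reals all_analysis.
From mathcomp Require Import ring lra measurable_realfun.
Import Order.TTheory GRing.Theory Num.Theory.
Import numFieldNormedType.Exports.
Local Open Scope classical_set_scope.
Local Open Scope ring_scope.



Section Real.
Context {R : realType}.
Lemma dhypE (x y : R) : dhyp x y = `|ln ((1 + x) / (1 - x)) - ln ((1 + y) / (1 - y))|.
Proof.
rewrite /dhyp /artanh -mulrBr normrM [`|2^-1|]ger0_norm; last by rewrite invr_ge0.
by rewrite mulrA divff ?mul1r // pnatr_eq0.
Qed.

Lemma key_ineq (a b c d e rho : R) : 0 < a -> 0 < b -> 0 < c -> 0 < d -> 0 < e ->
  0 < rho -> rho < 1 -> `|a - c| <= rho * (a + c) -> `|b - d| <= rho * (b + d) ->
  e * (a * d - b * c) <= rho * ((a * e + b) * (c * e + d)).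
Proof.
move=> a0 b0 c0 d0 e0 r0 r1 hac hbd.
have h1 : (1 - rho) * a <= (1 + rho) * c.
  have := ler_norm (a - c); lra.
have h2 : (1 - rho) * d <= (1 + rho) * b.
  have := ler_norm (d - b); rewrite distrC in hbd; lra.
set M := (1 - rho) * a * d - (1 + rho) * b * c.
suff : 0 <= rho * a * c * e ^+ 2 - M * e + rho * b * d.
  rewrite /M; move=> H; rewrite -subr_ge0.
  by have -> : rho * ((a * e + b) * (c * e + d)) - e * (a * d - b * c) =
     rho * a * c * e ^+ 2 - ((1 - rho) * a * d - (1 + rho) * b * c) * e + rho * b * d by ring.
have [M0|M0] := lerP M 0.
  have : 0 <= rho * a * c * e ^+ 2 by rewrite !mulr_ge0 // ?ltW // exprn_ge0 // ltW.
  have : 0 <= rho * b * d by rewrite !mulr_ge0 // ltW.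
  have : M * e <= 0 by rewrite mulr_le0_ge0 // ltW.
  lra.
have XY : b * c < a * d.
  have : 0 < rho * a * d by rewrite !mulr_gt0.
  have : 0 <= rho * b * c by rewrite !mulr_ge0 // ltW.
  rewrite /M in M0; lra.
have H2 : (1 - rho) ^+ 2 * (a * d) <= (1 + rho) ^+ 2 * (b * c).
  have -> : (1 - rho) ^+ 2 * (a * d) = ((1 - rho) * a) * ((1 - rho) * d) by ring.
  have -> : (1 + rho) ^+ 2 * (b * c) = ((1 + rho) * c) * ((1 + rho) * b) by ring.
  apply: ler_pM => //; apply: mulr_ge0; lra.
have Mb : M ^+ 2 <= 4 * rho ^+ 2 * (a * b * c * d).
  rewrite -subr_ge0.
  have -> : 4 * rho ^+ 2 * (a * b * c * d) - M ^+ 2 =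
    ((1 + rho) ^+ 2 * (b * c) - (1 - rho) ^+ 2 * (a * d)) * (a * d - b * c) by rewrite /M; ring.
  apply: mulr_ge0; lra.
have P : 0 < 4 * rho * a * c by rewrite !mulr_gt0.
have E : 4 * rho * a * c * (rho * a * c * e ^+ 2 - M * e + rho * b * d) =
   (2 * rho * a * c * e - M) ^+ 2 + (4 * rho ^+ 2 * (a * b * c * d) - M ^+ 2) by ring.
have : 0 <= 4 * rho * a * c * (rho * a * c * e ^+ 2 - M * e + rho * b * d).
  by rewrite E; apply: addr_ge0; [exact: sqr_ge0| lra].
by rewrite pmulr_rge0.
Qed.

Variables (a b c d : R).
Hypotheses (a0 : 0 < a) (b0 : 0 < b) (c0 : 0 < c) (d0 : 0 < d).

Definition gg (t : R) : R := ln (a * expR t + b) - ln (c * expR t + d).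
Definition dgg (t : R) : R := (a * expR t + b)^-1 * (a * expR t) - (c * expR t + d)^-1 * (c * expR t).

Lemma gg_derive (t : R) : is_derive t 1 gg (dgg t).
Proof.
have e0 := expR_gt0 t.
have ha : is_derive t (1:R) (fun t : R => a * expR t + b) (a * expR t).
  by apply: is_derive_eq; rewrite addr0.
have hc : is_derive t (1:R) (fun t : R => c * expR t + d) (c * expR t).
  by apply: is_derive_eq; rewrite addr0.
have pa : 0 < a * expR t + b by rewrite addr_gt0 // mulr_gt0.
have pc : 0 < c * expR t + d by rewrite addr_gt0 // mulr_gt0.
have la := @is_derive1_comp R (@ln R) (fun t : R => a * expR t + b) t _ _ (is_derive1_ln pa) ha.
have lc := @is_derive1_comp R (@ln R) (fun t : R => c * expR t + d) t _ _ (is_derive1_ln pc) hc.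
have -> : gg = (@ln R \o (fun t : R => a * expR t + b)) - (@ln R \o (fun t : R => c * expR t + d)).
  by apply/funext => s.
exact: is_deriveB la lc.
Qed.

Variable rho : R.
Hypotheses (r0 : 0 < rho) (r1 : rho < 1) (hac : `|a - c| <= rho * (a + c)) (hbd : `|b - d| <= rho * (b + d)).

Lemma dgg_bound (t : R) : `|dgg t| <= rho.
Proof.
have e0 := expR_gt0 t.
have pa : 0 < a * expR t + b by rewrite addr_gt0 // mulr_gt0.
have pc : 0 < c * expR t + d by rewrite addr_gt0 // mulr_gt0.
have -> : dgg t = expR t * (a * d - b * c) / ((a * expR t + b) * (c * expR t + d)).
  by rewrite /dgg; field; rewrite ?gt_eqF // ?mulr_gt0.
rewrite normrM normfV (gtr0_norm (mulr_gt0 pa pc)) ler_pdivrMr ?mulr_gt0 //.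
rewrite ler_norml; apply/andP; split; last exact: key_ineq.
have h1 : `|c - a| <= rho * (c + a) by rewrite distrC [c + a]addrC.
have h2 : `|d - b| <= rho * (d + b) by rewrite distrC [d + b]addrC.
have := @key_ineq c d a b (expR t) rho c0 d0 a0 b0 e0 r0 r1 h1 h2.
have -> : expR t * (c * b - d * a) = - (expR t * (a * d - b * c)) by ring.
by rewrite mulrC [(c * _ + _) * _]mulrC lerNl.
Qed.

Lemma gg_lip (s t : R) : `|gg s - gg t| <= rho * `|s - t|.
Proof.
wlog st : s t / s <= t.
  move=> H; case/orP: (le_total s t) => st; first exact: H.
  by rewrite distrC [`|s - t|]distrC; exact: H st.
have [->|st'] := eqVneq s t; first by rewrite !subrr normr0 mulr0.
have lt : s < t by rewrite lt_neqAle st' st.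
have cont : {within [set` `[s, t]], continuous gg}.
  apply: derivable_within_continuous => x _.
  by apply: ex_derive; exact: gg_derive.
rewrite distrC [`|s - t|]distrC.
have [x _ ->] := @MVT R gg dgg s t lt (fun x _ => gg_derive x) cont.
rewrite normrM; apply: ler_wpM2r => //; exact: dgg_bound.
Qed.
End Real.

Section Fmob.
Context {R : realType}.

Lemma fmob_ratio (B : 'M[R]_2) (x : R) : (forall i j, 0 < B i j) -> -1 < x < 1 ->
  let a := B 0 0 in let b := B 0 1 in let c := B 1 0 in let d := B 1 1 in
  (1 + fmob B x) / (1 - fmob B x) = (a * ((1 + x) / (1 - x)) + b) / (c * ((1 + x) / (1 - x)) + d)
  /\ 0 < (a * ((1 + x) / (1 - x)) + b) /\ 0 < (c * ((1 + x) / (1 - x)) + d).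
Proof.
move=> HB /andP[x1 x2] a b c d.
have a0 : 0 < a := HB _ _. have b0 : 0 < b := HB _ _.
have c0 : 0 < c := HB _ _. have d0 : 0 < d := HB _ _.
have p1 : 0 < 1 + x by lra.
have p2 : 0 < 1 - x by lra.
have u0 : 0 < (1 + x) / (1 - x) by rewrite divr_gt0.
have Dn : 0 < (a - b + c - d) * x + (a + b + c + d).
  have -> : (a - b + c - d) * x + (a + b + c + d) = (a + c) * (1 + x) + (b + d) * (1 - x) by ring.
  by rewrite addr_gt0 // mulr_gt0 // addr_gt0.
have Dm : 0 < (c * (1 + x) + d * (1 - x)).
  by rewrite addr_gt0 // mulr_gt0.
have Dp : 0 < (a * (1 + x) + b * (1 - x)).
  by rewrite addr_gt0 // mulr_gt0.
split; last by split; rewrite addr_gt0 // mulr_gt0.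
rewrite /fmob -/a -/b -/c -/d.
set N := (a - b - c + d) * x + (a + b - c - d).
set D := (a - b + c - d) * x + (a + b + c + d).
have E1 : 1 + N / D = 2 * (a * (1 + x) + b * (1 - x)) / D.
  by rewrite /N /D; field; rewrite gt_eqF.
have E2 : 1 - N / D = 2 * (c * (1 + x) + d * (1 - x)) / D.
  by rewrite /N /D; field; rewrite gt_eqF.
rewrite E1 E2.
field.
by rewrite !gt_eqF // ?mulr_gt0 // ?ltr0n // invr_gt0.
Qed.

Lemma fmob_contract (B : 'M[R]_2) (rho : R) : (forall i j, 0 < B i j) -> 0 < rho < 1 ->
  (forall x, -1 <= x <= 1 -> -rho <= fmob B x <= rho) ->
  forall x y, -1 < x < 1 -> -1 < y < 1 -> dhyp (fmob B x) (fmob B y) <= rho * dhyp x y.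
Proof.
move=> HB /andP[r0 r1] Hf x y hx hy.
set a := B 0 0; set b := B 0 1; set c := B 1 0; set d := B 1 1.
have a0 : 0 < a := HB _ _. have b0 : 0 < b := HB _ _.
have c0 : 0 < c := HB _ _. have d0 : 0 < d := HB _ _.
have hac : `|a - c| <= rho * (a + c).
  have := Hf 1; rewrite /fmob -/a -/b -/c -/d lexx !mulr1.
  have -> : a - b - c + d + (a + b - c - d) = 2 * (a - c) by ring.
  have -> : a - b + c - d + (a + b + c + d) = 2 * (a + c) by ring.
  rewrite -mulf_div divff ?pnatr_eq0 // mul1r => /(_ ltac:(lra)).
  have ac : 0 < a + c by rewrite addr_gt0.
  by rewrite -ler_norml normf_div (gtr0_norm ac) ler_pdivrMr.
have hbd : `|b - d| <= rho * (b + d).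
  have := Hf (-1); rewrite /fmob -/a -/b -/c -/d lexx !mulrN1.
  have -> : - (a - b - c + d) + (a + b - c - d) = 2 * (b - d) by ring.
  have -> : - (a - b + c - d) + (a + b + c + d) = 2 * (b + d) by ring.
  rewrite -mulf_div divff ?pnatr_eq0 // mul1r => /(_ ltac:(lra)).
  have bd : 0 < b + d by rewrite addr_gt0.
  by rewrite -ler_norml normf_div (gtr0_norm bd) ler_pdivrMr.
have [ex [pa pc]] := fmob_ratio B x HB hx.
have [ey [qa qc]] := fmob_ratio B y HB hy.
rewrite !dhypE ex ey.
have ux : 0 < (1 + x) / (1 - x) by case/andP: hx => ? ?; rewrite divr_gt0 //; lra.
have uy : 0 < (1 + y) / (1 - y) by case/andP: hy => ? ?; rewrite divr_gt0 //; lra.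
have E : forall u, 0 < u -> ln ((a * u + b) / (c * u + d)) = gg a b c d (ln u).
  move=> u u0; rewrite /gg lnK ?posrE // ln_div // posrE addr_gt0 // mulr_gt0 //.
rewrite !E //.
exact: (@gg_lip R a b c d a0 b0 c0 d0 rho r0 r1 hac hbd).
Qed.

Lemma dhyp0_bound (y rho : R) : 0 < rho < 1 -> -rho <= y <= rho ->
  dhyp y 0 <= ln ((1 + rho) / (1 - rho)).
Proof.
move=> /andP[r0 r1] /andP[y1 y2].
rewrite dhypE subr0 addr0 divr1 ln1 subr0.
have z0 : 0 < (1 + y) / (1 - y) by rewrite divr_gt0 //; lra.
have K0 : 0 < (1 + rho) / (1 - rho) by rewrite divr_gt0 //; lra.
rewrite ler_norml; apply/andP; split.
  rewrite -lnV ?posrE // ler_ln ?posrE ?invr_gt0 // invf_div.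
  rewrite ler_pdivrMr; last lra.
  rewrite mulrAC ler_pdivlMr; last lra.
  nra.
rewrite ler_ln ?posrE //.
rewrite ler_pdivrMr; last lra.
rewrite mulrAC ler_pdivlMr; last lra.
nra.
Qed.

End Fmob.



Section Meas.
Context {R : realType}.

Lemma measurable_inv : measurable_fun [set: R] (@GRing.inv R).
Proof.
have -> : [set: R] = ~` [set 0] `|` [set 0] by rewrite setUC setUCr.
apply/measurable_funU => //; first exact: measurableC.
split.
  apply: open_continuous_measurable_fun.
    by apply: closed_openC; apply: accessible_closed_set1; apply: hausdorff_accessible; exact: Rhausdorff.
  by move=> x; rewrite inE /= => /eqP x0; exact: inv_continuous.
move=> _ Y mY; rewrite /=.
have [Y0|Y0] := pselect (Y 0^-1).
  by rewrite (_ : _ `&` _ = [set 0]) //; apply/seteqP; split => [z [->]//|z ->]; split.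
by rewrite (_ : _ `&` _ = set0) //; apply/seteqP; split => [z [/= ->]//|].
Qed.

Lemma measurable_fmob (B : 'M[R]_2) : measurable_fun [set: R] (fmob B).
Proof.
rewrite /fmob.
apply: measurable_funM.
  by apply: measurable_funD => //; apply: measurable_funM.
apply: measurableT_comp; first exact: measurable_inv.
by apply: measurable_funD => //; apply: measurable_funM.
Qed.

Lemma measurable_artanh : measurable_fun [set: R] (@artanh R).
Proof.
rewrite /artanh; apply: measurable_funM => //.
apply: measurableT_comp; first exact: measurable_ln.
apply: measurable_funM; first exact: measurable_funD.
apply: measurableT_comp; first exact: measurable_inv.
exact: measurable_funB.
Qed.

Lemma measurable_dhyp2 : measurable_fun [set: (R * R)%type] (fun z : R * R => (dhyp z.1 z.2)%:E).
Proof.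
apply: measurableT_comp => //; rewrite /dhyp.
apply: measurable_funM => //.
apply: measurableT_comp => //.
apply: measurable_funB.
  exact: measurableT_comp measurable_artanh measurable_fst.
exact: measurableT_comp measurable_artanh measurable_snd.
Qed.

Lemma measurable_dhyp0 : measurable_fun [set: R] (fun x : R => (dhyp x 0)%:E).
Proof.
apply: measurableT_comp => //; rewrite /dhyp.
apply: measurable_funM => //.
apply: measurableT_comp => //.
apply: measurable_funB => //.
exact: measurable_artanh.
Qed.

End Meas.



Section Mix.
Context d d' (T : measurableType d) (T' : measurableType d') (R : realType) (I : finType).

Record mixdata := MixData {
  mw : I -> R; mm : I -> probability T R; mf : I -> T -> T';
  mw0 : forall i, 0 <= mw i; mw1 : \sum_i mw i = 1;
  mmf : forall i, measurable_fun [set: T] (mf i) }.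

Definition pfw (D : mixdata) (i : I) : set T' -> \bar R := pushforward (mm D i) (mf D i).

Section pfw_measure.
Variables (D : mixdata) (i : I).
Let pfw0 : pfw D i set0 = 0%E.
Proof. by rewrite /pfw /pushforward preimage_set0 measure0. Qed.
Let pfw_ge0 A : (0 <= pfw D i A)%E.
Proof. by rewrite /pfw /pushforward; exact: measure_ge0. Qed.
Let pfw_sigma_additive : semi_sigma_additive (pfw D i).
Proof.
move=> F mF tF mUF; rewrite /pfw /pushforward preimage_bigcup.
have mf := mmf D i.
apply: measure_semi_sigma_additive.
- by move=> n; rewrite -[X in measurable X]setTI; exact: mf.
- apply/trivIsetP => /= a b _ _ ab; rewrite -preimage_setI.
  by move/trivIsetP : tF => /(_ _ _ _ _ ab) ->//; rewrite preimage_set0.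
- by rewrite -preimage_bigcup -[X in measurable X]setTI; exact: mf.
Qed.
HB.instance Definition _ := isMeasure.Build _ _ _ (pfw D i)
  pfw0 pfw_ge0 pfw_sigma_additive.
End pfw_measure.

Definition pfs (D : mixdata) (i : I) : {measure set T' -> \bar R} :=
  mscale (NngNum (mw0 D i)) (pfw D i).

Lemma pfsE (D : mixdata) (i : I) A : pfs D i A = ((mw D i)%:E * mm D i (mf D i @^-1` A))%E.
Proof. by []. Qed.

Definition mixs (D : mixdata) (s : seq I) : set T' -> \bar R :=
  fun A => (\sum_(i <- s) pfs D i A)%E.

Section mixs_measure.
Variables (D : mixdata) (s : seq I).
Let mixs0 : mixs D s set0 = 0%E.
Proof. by rewrite /mixs big1 // => i _; rewrite measure0. Qed.
Let mixs_ge0 A : (0 <= mixs D s A)%E.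
Proof. by rewrite /mixs; apply: sume_ge0 => i _; exact: measure_ge0. Qed.
Let mixs_sigma_additive : semi_sigma_additive (mixs D s).
Proof.
move=> F mF tF mUF; rewrite [X in _ --> X](_ : _ =
    lim ((fun n => (\sum_(0 <= i < n) mixs D s (F i))%E) @ \oo)).
  by apply: is_cvg_ereal_nneg_natsum => k _; exact: mixs_ge0.
rewrite nneseries_sum//.
rewrite /mixs; apply: eq_bigr => /= i _.
exact: measure_semi_bigcup.
Qed.
HB.instance Definition _ := isMeasure.Build _ _ _ (mixs D s)
  mixs0 mixs_ge0 mixs_sigma_additive.
End mixs_measure.

Definition mixp (D : mixdata) : set T' -> \bar R := mixs D (index_enum I).

HB.instance Definition _ (D : mixdata) := Measure.on (mixp D).

Section mixp_prob.
Variable D : mixdata.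
Let mixp_setT : mixp D [set: T'] = 1%E.
Proof.
rewrite /mixp /mixs.
under eq_bigr => i _ do rewrite pfsE preimage_setT probability_setT mule1.
by rewrite sumEFin mw1.
Qed.
HB.instance Definition _ := Measure_isProbability.Build _ _ _ (mixp D) mixp_setT.
End mixp_prob.

Lemma mixp_integral (D : mixdata) (h : T' -> \bar R) :
  measurable_fun [set: T'] h -> (forall x, 0 <= h x)%E ->
  (\int[mixp D]_x h x = \sum_i (mw D i)%:E * \int[mm D i]_x h (mf D i x))%E.
Proof.
move=> mh h0; rewrite /mixp.
elim: (index_enum I) => [|i s IH].
  rewrite big_nil.
  have -> : mixs D [::] = mzero by apply/funext => A; rewrite /mixs big_nil.
  by rewrite integral_measure_zero.
have -> : mixs D (i :: s) = measure_add (pfs D i) (mixs D s).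
  by apply/funext => A; rewrite measure_addE /mixs big_cons.
rewrite ge0_integral_measure_add //.
rewrite big_cons IH.
congr (_ + _)%E.
rewrite /pfs ge0_integral_mscale //=.
by rewrite /pfw ge0_integral_pushforward //=; try exact: mmf.
Qed.

End Mix.



Lemma prob_le_on d (T : measurableType d) (R : realType) (mu : probability T R) (D : set T)
  (h1 h2 : T -> \bar R) : measurable D -> mu D = 1%E ->
  measurable_fun [set: T] h1 -> measurable_fun [set: T] h2 ->
  (forall x, 0 <= h1 x)%E -> (forall x, 0 <= h2 x)%E -> (forall x, D x -> h1 x <= h2 x)%E ->
  (\int[mu]_x h1 x <= \int[mu]_x h2 x)%E.
Proof.
move=> mD muD m1 m2 p1 p2 le.
apply: ae_ge0_le_integral => //.
exists (~` D); split.
- exact: measurableC.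
- by have := probability_setC mu mD; rewrite muD subee.
- by move=> x /= H Dx; apply: H => _; exact: le.
Qed.

Section Prod.
Context {R : realType}.

Lemma measurable_Iopen : measurable (@Iopen R).
Proof. exact: measurable_itv. Qed.

Lemma coupling_Iopen (nu1 nu2 : probability R R) (g : probability (R * R)%type R) :
  coupling nu1 nu2 g -> nu1 (@Iopen R) = 1%E -> nu2 (@Iopen R) = 1%E ->
  g ((@Iopen R) `*` (@Iopen R)) = 1%E.
Proof.
move=> [c1 c2] h1 h2.
have mI := measurable_Iopen.
have mX : measurable ((@Iopen R) `*` (@Iopen R) : set (R * R)) by exact: measurableX.
have E : ~` ((@Iopen R) `*` (@Iopen R)) = fst @^-1` (~` (@Iopen R)) `|` snd @^-1` (~` (@Iopen R)) :> set (R * R).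
  apply/seteqP; split => [[x y] /= H|[x y] /= [H|H] [H1 H2]//].
  by have [Hx|Hx] := pselect ((@Iopen R) x); [right => Hy; apply: H|left].
have m1 : measurable (fst @^-1` (~` (@Iopen R)) : set (R * R)).
  by rewrite -[X in measurable X]setTI; apply: measurable_fst => //; exact: measurableC.
have m2 : measurable (snd @^-1` (~` (@Iopen R)) : set (R * R)).
  by rewrite -[X in measurable X]setTI; apply: measurable_snd => //; exact: measurableC.
have C0 : g (~` ((@Iopen R) `*` (@Iopen R))) = 0%E.
  apply/eqP; rewrite eq_le measure_ge0 andbT E.
  apply: le_trans (measureU2 _ m1 m2) _.
  have e1 : g (fst @^-1` (~` @Iopen R)) = 0%E.
    by rewrite c1 ?probability_setC ?h1 ?subee //; exact: measurableC.
  have e2 : g (snd @^-1` (~` @Iopen R)) = 0%E.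
    by rewrite c2 ?probability_setC ?h2 ?subee //; exact: measurableC.
  by move: e1 e2 => /= -> ->; rewrite adde0.
move: (probability_setC g mX) (probability_le1 g mX); rewrite C0 /=.
case: (g _) => [r| |] //=.
  by move=> /esym/eqP; rewrite -EFinB eqe subr_eq0 => /eqP <-.
Qed.

End Prod.



Lemma Iopen_itv (R : realType) (x : R) : @Iopen R x -> -1 < x < 1.
Proof. by rewrite /Iopen /= in_itv. Qed.

Lemma fmob_Iopen (R : realType) (B : 'M[R]_2) (rho : R) : 0 < rho < 1 ->
  (forall x, -1 <= x <= 1 -> -rho <= fmob B x <= rho) ->
  forall x, @Iopen R x -> -rho <= fmob B x <= rho.
Proof.
move=> _ Hf x /Iopen_itv /andP[x1 x2]; apply: Hf; apply/andP; split; exact: ltW.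
Qed.

Theorem proposition3p4 (R : realType) (C : finType)
  (Q : C -> C -> R) (pi : C -> R) (B : C -> 'M[R]_2) (rho : R)
  (* Q restricted to C: stochastic, irreducible and aperiodic (primitive) *)
  (HQ0 : forall r r', 0 <= Q r r')
  (HQ1 : forall r, \sum_(r' : C) Q r r' = 1)
  (HQprim : exists n : nat, forall r r', 0 < kpow Q n r r')
  (* pi: the (positive) stationary probability vector *)
  (Hpi0 : forall r, 0 < pi r)
  (Hpi1 : \sum_(r : C) pi r = 1)
  (Hpistat : forall r', \sum_(r : C) pi r * Q r r' = pi r')
  (* B_r entrywise positive *)
  (HB : forall r i j, 0 < B r i j)
  (* 0 < rho < 1 and f_r([-1,1]) in [-rho,rho] *)
  (Hrho : 0 < rho < 1)
  (Hf : forall r x, -1 <= x <= 1 -> -rho <= fmob (B r) x <= rho) :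
  (forall eta : C -> probability R R, P1C eta ->
     exists eta' : C -> probability R R,
       P1C eta' /\ forall r', (eta' r' : set R -> \bar R) = Hset pi Q B eta r') /\
  (forall eta zeta eta' zeta' : C -> probability R R,
     P1C eta -> P1C zeta ->
     (forall r', (eta' r' : set R -> \bar R) = Hset pi Q B eta r') ->
     (forall r', (zeta' r' : set R -> \bar R) = Hset pi Q B zeta r') ->
     (Wc pi eta' zeta' <= rho%:E * Wc pi eta zeta)%E).
Proof.
set w := fun r' r => pi r * Q r r' / pi r'.
have w0 : forall r' r, 0 <= w r' r.
  by move=> r' r; rewrite /w divr_ge0 ?mulr_ge0 // ltW.
have w1 : forall r', \sum_r w r' r = 1.
  move=> r'; rewrite /w -mulr_suml Hpistat divff //; exact: lt0r_neq0.
have mfm : forall r, measurable_fun [set: R] (fmob (B r)) by move=> r; exact: measurable_fmob.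
have mI := @measurable_Iopen R.
split.
  move=> eta Peta.
  pose D1 r' := @MixData _ _ R R R C (w r') eta (fun r => fmob (B r)) (w0 r') (w1 r') mfm.
  exists (fun r' => (@mixp _ _ _ _ _ _ (D1 r') : probability R R)); split; last first.
    by move=> r'; apply/funext => A.
  have pre : forall r, measurable (fmob (B r) @^-1` @Iopen R).
    by move=> r; rewrite -[X in measurable X]setTI; exact: mfm r measurableT _ mI.
  have Isub : forall r, @Iopen R `<=` fmob (B r) @^-1` @Iopen R.
    move=> r x Ix; have /andP[h1 h2] := @fmob_Iopen R (B r) rho Hrho (Hf r) x Ix.
    by rewrite /Iopen /= in_itv /=; case/andP: Hrho => ? ?; apply/andP; split; lra.
  have e1 : forall r, eta r (fmob (B r) @^-1` @Iopen R) = 1%E.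
    move=> r; apply/eqP; rewrite eq_le probability_le1 //=.
    rewrite -{1}(Peta r).1; apply: le_measure; rewrite ?inE //; exact: Isub.
  move=> r'; split.
    rewrite /= /mixp /mixs.
    under eq_bigr => r _ do rewrite pfsE /= e1 mule1.
    by rewrite sumEFin w1.
  have [r0 r1] : 0 < rho /\ rho < 1 by case/andP: Hrho.
  set Kc := ln ((1 + rho) / (1 - rho)).
  have Kc0 : 0 <= Kc.
    rewrite /Kc ln_ge0 // ler_pdivlMr; last lra.
    lra.
  have dh0 : forall x y : R, (0 <= (dhyp x y)%:E)%E.
    by move=> x y; rewrite lee_fin /dhyp mulr_ge0.
  have bd : forall r, (\int[eta r]_x (dhyp (fmob (B r) x) 0)%:E <= Kc%:E)%E.
    move=> r.
    apply: le_trans (@prob_le_on _ _ _ (eta r) (@Iopen R) _ (cst Kc%:E) mI (Peta r).1 _ _ _ _ _) _.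
    - exact: measurableT_comp (@measurable_dhyp0 R) (mfm r).
    - exact: measurable_cst.
    - by move=> x; exact: dh0.
    - by move=> x; rewrite lee_fin.
    - move=> x Ix; rewrite lee_fin; apply: dhyp0_bound => //.
      exact: (@fmob_Iopen R (B r) rho Hrho (Hf r) x Ix).
    by rewrite integral_cst //= probability_setT mule1.
  rewrite mixp_integral; last by move=> x; exact: dh0.
    apply: le_lt_trans (_ : _ <= (\sum_r (w r' r * Kc))%:E)%E _; last exact: ltry.
    rewrite -sumEFin; apply: lee_sum => r _.
    rewrite (EFinM (w r' r) Kc); apply: lee_wpmul2l; [rewrite lee_fin; exact: w0|exact: bd].
  exact: measurable_dhyp0.
have [r0 r1] : 0 < rho /\ rho < 1 by case/andP: Hrho.
have dh0 : forall x y : R, (0 <= (dhyp x y)%:E)%E.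
  by move=> x y; rewrite lee_fin /dhyp mulr_ge0.
move=> eta zeta eta' zeta' Peta Pzeta Heta Hzeta.
have c0 : forall r, (0 <= W1 (eta r) (zeta r))%E.
  move=> r; apply: le_ereal_inf_tmp => x [g _ <-].
  by apply: integral_ge0 => z _; exact: dh0.
have [[r cr]|nfin] := pselect (exists r, W1 (eta r) (zeta r) = +oo%E).
  have -> : Wc pi eta zeta = +oo%E.
    have s0 : (0 <= \sum_(i | i != r) (pi i)%:E * W1 (eta i) (zeta i))%E.
      by apply: sume_ge0 => i _; apply: mule_ge0; [rewrite lee_fin ltW|exact: c0].
    rewrite /Wc (bigD1 r) //= cr gt0_muley ?lte_fin // addye //.
    by rewrite gt_eqF // (lt_le_trans _ s0) // ltNy0.
  by rewrite gt0_muley ?lte_fin // leey.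
have cf : forall r, W1 (eta r) (zeta r) \is a fin_num.
  move=> r; rewrite ge0_fin_numE // ltey; apply/negP => /eqP H.
  by apply: nfin; exists r.
apply/lee_addgt0Pr => e e0.
set eps := e / rho.
have eps0 : 0 < eps by rewrite divr_gt0.
have /choice [g Hg] : forall r, exists g : probability (R * R)%type R,
    coupling (eta r) (zeta r) g /\
    (\int[g]_z (dhyp z.1 z.2)%:E < W1 (eta r) (zeta r) + eps%:E)%E.
  move=> r; have [x [g cg <-] lt] := lb_ereal_inf_adherent eps0 (cf r).
  by exists g; split.
pose F r := fun z : R * R => (fmob (B r) z.1, fmob (B r) z.2).
have mF : forall r, measurable_fun [set: (R * R)%type] (F r).
  move=> r; apply: measurable_fun_pair.
    exact: measurableT_comp (mfm r) measurable_fst.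
  exact: measurableT_comp (mfm r) measurable_snd.
pose D2 r' := @MixData _ _ (R * R)%type (R * R)%type R C (w r') g F (w0 r') (w1 r') mF.
pose G r' : probability (R * R)%type R := @mixp _ _ _ _ _ _ (D2 r').
have prem : forall r (A : set R), measurable A -> measurable (fmob (B r) @^-1` A).
  by move=> r A mA; rewrite -[X in measurable X]setTI; exact: mfm r measurableT _ mA.
have cG : forall r', coupling (eta' r') (zeta' r') (G r').
  move=> r'; split => A mA.
    rewrite Heta /Hset /= /mixp /mixs; apply: eq_bigr => r _.
    by rewrite pfsE /=; congr (_ * _)%E; exact: (Hg r).1.1 _ (prem r A mA).
  rewrite Hzeta /Hset /= /mixp /mixs; apply: eq_bigr => r _.
  by rewrite pfsE /=; congr (_ * _)%E; exact: (Hg r).1.2 _ (prem r A mA).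
have mX : measurable (@Iopen R `*` @Iopen R) by exact: measurableX.
have W1le : forall r', (W1 (eta' r') (zeta' r') <=
    (\sum_r w r' r * (rho * (fine (W1 (eta r) (zeta r)) + eps)))%:E)%E.
  move=> r'.
  apply: (le_trans (_ : _ <= \int[G r']_z (dhyp z.1 z.2)%:E)%E).
    by apply: ge_ereal_inf; exists (\int[G r']_z (dhyp z.1 z.2)%:E)%E => //; exists (G r') => //; exact: cG.
  rewrite mixp_integral; last by move=> z; exact: dh0.
    rewrite -sumEFin; apply: lee_sum => r _.
    rewrite (EFinM (w r' r)); apply: lee_wpmul2l; first by rewrite lee_fin; exact: w0.
    rewrite /D2 /=.
    have := @prob_le_on _ _ _ (g r) (@Iopen R `*` @Iopen R) (fun z => (dhyp (F r z).1 (F r z).2)%:E)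
       (fun z => rho%:E * (dhyp z.1 z.2)%:E)%E mX
       (@coupling_Iopen R (eta r) (zeta r) (g r) (Hg r).1 (Peta r).1 (Pzeta r).1).
    move=> H; apply: le_trans (H _ _ _ _ _) _.
    - exact: measurableT_comp (@measurable_dhyp2 R) (mF r).
    - exact: measurable_funeM (@measurable_dhyp2 R).
    - by move=> z; exact: dh0.
    - by move=> z; apply: mule_ge0; [rewrite lee_fin ltW|exact: dh0].
    - move=> [x y] [/= Ix Iy]; rewrite -EFinM lee_fin.
      apply: fmob_contract => //; try exact: Iopen_itv.
      exact: Hf.
    rewrite ge0_integralZl //; try (by move=> z _; exact: dh0); try exact: measurable_dhyp2;
      try (by rewrite lee_fin ltW).
    rewrite EFinM; apply: lee_wpmul2l; first by rewrite lee_fin ltW.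
    by rewrite EFinD (fineK (cf r)); exact: ltW (Hg r).2.
  exact: measurable_dhyp2.
rewrite /Wc.
set cr := fun r => fine (W1 (eta r) (zeta r)).
have Wce : (\sum_r (pi r)%:E * W1 (eta r) (zeta r) = (\sum_r pi r * cr r)%:E)%E.
  by rewrite -sumEFin; apply: eq_bigr => r _; rewrite EFinM fineK.
rewrite Wce.
apply: le_trans (_ : _ <= \sum_r' (pi r')%:E * (\sum_r w r' r * (rho * (cr r + eps)))%:E)%E _.
  by apply: lee_sum => r' _; apply: lee_wpmul2l; [rewrite lee_fin ltW | exact: W1le].
under eq_bigr do rewrite -EFinM.
rewrite sumEFin -EFinM -EFinD lee_fin.
have -> : \sum_r' pi r' * (\sum_r w r' r * (rho * (cr r + eps))) =
    \sum_r' \sum_r pi r * Q r r' * (rho * (cr r + eps)).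
  apply: eq_bigr => r' _; rewrite mulr_sumr; apply: eq_bigr => r _.
  by rewrite /w; field; exact: lt0r_neq0.
rewrite exchange_big /=.
have -> : \sum_r \sum_r' pi r * Q r r' * (rho * (cr r + eps)) =
    \sum_r pi r * (rho * (cr r + eps)).
  apply: eq_bigr => r _; rewrite -mulr_suml -mulr_sumr HQ1 mulr1 //.
have -> : \sum_r pi r * (rho * (cr r + eps)) = rho * \sum_r pi r * cr r + rho * eps * \sum_r pi r.
  rewrite !mulr_sumr -big_split /=; apply: eq_bigr => r _; ring.
rewrite Hpi1 mulr1 /eps [rho * (e / rho)]mulrC divfK; last exact: lt0r_neq0.
by [].
Qed.
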